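(* Let $X$ be a Banach space and let $q\geq2$. The following are equivalent: (i) $\mathcal F(X)$ has Rademacher cotype (resp. cotype $q$); (ii) $\mathcal F(K)$ has Rademacher cotype (resp. cotype $q$) for every compact set $K\subset X$; (ii') $\mathcal F(K)$ has Rademacher cotype (resp. cotype $q$) for every countable compact set $K\subset X$; (iii) $\mathcal F(\{x_n\}_n)$ has Rademacher cotype (resp. cotype $q$) for every null sequence $(x_n)_n\subset X$.
   Context: For a pointed metric space $M$ (the choice of base point does not affect the isomorphism class), $\mathrm{Lip}_0(M)$ is the Banach space of real Lipschitz functions vanishing at the base point normed by the Lipschitz constant, and $\mathcal F(M)=\overline{\mathrm{span}}\{\delta(x):x\in M\}\subset\mathrm{Lip}_0(M)^*$, $\delta(x)$ being evaluation at $x$. A Banach space has Rademacher cotype if it has cotype $q$ for some $q<\infty$. A null sequence is a sequence converging to $0$ in norm; $\{x_n\}_n$ denotes its set of terms with the metric from $X$. *)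

(* Defs.v *)
From HB Require Import structures.
From mathcomp Require Import all_boot all_order all_algebra.
From mathcomp Require Import all_classical all_reals all_analysis.
Set Implicit Arguments. Unset Strict Implicit. Unset Printing Implicit Defensive.
Import Order.TTheory GRing.Theory Num.Theory.
Import numFieldNormedType.Exports.
Local Open Scope classical_set_scope.
Local Open Scope ring_scope.

(* Lip_0(S) is modeled by functions f : X -> R (only the values on S matter)
   with f p = 0 and Lipschitz on S.  Elements of F(S) are modeled as
   (restrictions to the unit ball of Lip_0(S) of) functionals
   phi : (X -> R) -> R which are uniform limits on that ball of finite
   linear combinations of evaluations delta(y), y in S. *)

Section Free.
Context {R : realType} {X : normedModType R}.

Definition lip1_0 (S : set X) (p : X) (f : X -> R) : Prop :=
  f p = 0 /\ forall x y, S x -> S y -> `|f x - f y| <= `|x - y|.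

Definition in_free (S : set X) (p : X) (phi : (X -> R) -> R) : Prop :=
  forall e : R, 0 < e ->
    exists n (a : 'I_n -> R) (y : 'I_n -> X),
      (forall i, S (y i)) /\
      forall f, lip1_0 S p f -> `|phi f - \sum_(i < n) a i * f (y i)| <= e.

Definition free_norm (S : set X) (p : X) (phi : (X -> R) -> R) : R :=
  sup [set r | exists f, lip1_0 S p f /\ r = `|phi f|].

Definition sgn (b : bool) : R := if b then 1 else -1.

Definition free_cotype (q : R) (S : set X) (p : X) : Prop :=
  exists C : R, 0 < C /\
    forall n (phi : 'I_n -> (X -> R) -> R), (forall i, in_free S p (phi i)) ->
      (\sum_(i < n) free_norm S p (phi i) `^ q) `^ q^-1 <=
      C * Num.sqrt ((\sum_(e : {ffun 'I_n -> bool})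
                       free_norm S p (fun f => \sum_(i < n) sgn (e i) * phi i f) ^+ 2)
                    / 2 ^+ n).

Definition free_rad_cotype (S : set X) (p : X) : Prop :=
  exists q : R, 2 <= q /\ free_cotype q S p.

End Free.

(* Main.v *)
Require Import Defs.
From HB Require Import structures.
From mathcomp Require Import all_boot all_order all_algebra.
From mathcomp Require Import all_classical all_reals all_analysis.
From mathcomp Require Import ring lra zify.
Import Order.TTheory GRing.Theory Num.Theory.
Import numFieldNormedType.Exports.
Local Open Scope classical_set_scope.
Local Open Scope ring_scope.

Set Implicit Arguments. Unset Strict Implicit. Unset Printing Implicit Defensive.

Section A.
Context {R : realType} {X : normedModType R}.
Implicit Types (S T A : set X) (p : X) (phi : (X -> R) -> R).

Lemma lip1_0_zero S p : lip1_0 S p (fun _ => 0).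
Proof. by split=> // x y _ _; rewrite subrr normr0. Qed.

Definition bnd S p phi := exists B, forall f, lip1_0 S p f -> `|phi f| <= B.

Lemma free_norm_ge0 S p phi : 0 <= free_norm S p phi.
Proof.
rewrite /free_norm; set E := (X in sup X).
have [hs|hs] := pselect (has_ubound E).
  apply: (@le_trans _ _ `|phi (fun=> 0)|) => //; apply: ub_le_sup => //.
  by exists (fun=> 0); split => //; exact: lip1_0_zero.
by rewrite sup_out // => -[].
Qed.

Lemma free_norm_ub S p phi f : bnd S p phi -> lip1_0 S p f ->
  `|phi f| <= free_norm S p phi.
Proof.
move=> [B hB] hf; apply: ub_le_sup; last by exists f.
by exists B => r [g [hg ->]]; exact: hB.
Qed.

Lemma free_norm_le S p phi c : (forall f, lip1_0 S p f -> `|phi f| <= c) ->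
  free_norm S p phi <= c.
Proof.
move=> h; apply: ge_sup.
  by exists `|phi (fun _ => 0)|, (fun _ => 0); split => //; exact: lip1_0_zero.
by move=> r [g [hg ->]]; exact: h.
Qed.

Lemma mcshane A (g : X -> R) : A !=set0 ->
  (forall x y, A x -> A y -> `|g x - g y| <= `|x - y|) ->
  exists G : X -> R, (forall x, A x -> G x = g x) /\
     forall x y, `|G x - G y| <= `|x - y|.
Proof.
move=> [a0 Aa0] hg.
pose E x := [set r | exists2 a, A a & r = g a + `|x - a|].
pose G x := inf (E x).
have lbE x : has_lbound (E x).
  exists (g a0 - `|x - a0|) => r [a Aa ->].
  have h1 := hg _ _ Aa Aa0.
  have h2 : `|a - a0| <= `|x - a| + `|x - a0|.
    by have := ler_normD (a - x) (x - a0); rewrite addrA subrK [`|a - x|]distrC.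
  move: h1; rewrite ler_norml => /andP[h1 _]; lra.
have neE x : E x !=set0 by exists (g a0 + `|x - a0|), a0.
have hi x a : A a -> G x <= g a + `|x - a|.
  by move=> Aa; apply: ge_inf => //; exists a.
have hii x b : (forall a, A a -> b <= g a + `|x - a|) -> b <= G x.
  by move=> hb; apply: lb_le_inf => // r [a Aa ->]; exact: hb.
have hlip x y : G x - G y <= `|x - y|.
  suff : G x - `|x - y| <= G y by lra.
  apply: hii => a Aa; have := hi x a Aa.
  have : `|x - a| <= `|x - y| + `|y - a|.
    by have := ler_normD (x - y) (y - a); rewrite addrA subrK.
  lra.
exists G; split.
  move=> x Ax; apply/eqP; rewrite eq_le; apply/andP; split.
    by have := hi x x Ax; rewrite subrr normr0 addr0.
  apply: hii => a Aa; have := hg _ _ Ax Aa; rewrite ler_norml => /andP[_ h]; lra.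
move=> x y; rewrite ler_norml; apply/andP; split; last exact: hlip.
by have := hlip y x; rewrite distrC; lra.
Qed.

End A.

Section B.
Context {R : realType} {X : normedModType R}.
Implicit Types (S T A : set X) (p : X) (phi : (X -> R) -> R).

Definition finv S p phi := forall f g, lip1_0 S p f -> lip1_0 S p g ->
  (forall x, S x -> f x = g x) -> phi f = phi g.

Lemma in_free_inv S p phi : in_free S p phi -> finv S p phi.
Proof.
move=> hphi f g hf hg hfg; apply/eqP/negPn/negP => hne.
have dpos : 0 < `|phi f - phi g| by rewrite normr_gt0 subr_eq0.
have [n [a [y [Sy hy]]]] := hphi (`|phi f - phi g| / 3) (divr_gt0 dpos (ltr0n _ 3)).
have e1 := hy f hf; have e2 := hy g hg.
have eq1 : \sum_(i < n) a i * g (y i) = \sum_(i < n) a i * f (y i).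
  by apply: eq_bigr => i _; rewrite hfg.
rewrite eq1 in e2.
have := ler_normD (phi f - \sum_(i < n) a i * f (y i)) (\sum_(i < n) a i * f (y i) - phi g).
rewrite addrA subrK (distrC (\sum_(i < n) a i * f (y i))); lra.
Qed.

Lemma in_free_bnd S p phi : S p -> in_free S p phi -> bnd S p phi.
Proof.
move=> Sp hphi; have [n [a [y [Sy hy]]]] := hphi 1 ltr01.
exists (1 + \sum_(i < n) `|a i| * `|y i - p|) => f hf.
have h1 := hy f hf.
have h2 : `|\sum_(i < n) a i * f (y i)| <= \sum_(i < n) `|a i| * `|y i - p|.
  apply: le_trans (ler_norm_sum _ _ _) _; apply: ler_sum => i _.
  rewrite normrM ler_wpM2l //; case: hf => hf0 hf.
  by have := hf _ _ (Sy i) Sp; rewrite hf0 subr0.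
have := ler_normD (phi f - \sum_(i < n) a i * f (y i)) (\sum_(i < n) a i * f (y i)).
rewrite subrK; lra.
Qed.

Lemma restrict_norm S T p p' Phi : finv T p Phi -> T `<=` S -> T p -> S p' ->
  free_norm S p' (fun f => Phi (fun x => f x - f p)) = free_norm T p Phi.
Proof.
move=> hinv TS Tp Sp'; rewrite /free_norm; congr sup.
apply/seteqP; split => r [f [hf ->]].
  exists (fun x => f x - f p); split => //; split; first by rewrite subrr.
  move=> x y Tx Ty; rewrite opprB addrA subrK.
  by case: hf => _ hf; apply: hf; apply: TS.
have [G [GT Glip]] : exists G : X -> R, (forall x, T x -> G x = f x) /\
     forall x y, `|G x - G y| <= `|x - y|.
  by apply: mcshane; [exists p | case: hf => _ hf].
exists (fun x => G x - G p'); split.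
  split; first by rewrite subrr.
  by move=> x y _ _; rewrite opprB addrA subrK.
congr (`|_|); apply: hinv => //.
- split; first by rewrite subrr.
  move=> x y _ _ /=.
  suff -> : G x - G p' - (G p - G p') - (G y - G p' - (G p - G p')) = G x - G y by [].
  lra.
- move=> x Tx /=; rewrite (GT x) // (GT p) //; case: hf => hf0 _; rewrite hf0; lra.
Qed.

Lemma restrict_infree S T p p' phi : T `<=` S -> T p -> in_free T p phi ->
  in_free S p' (fun f => phi (fun x => f x - f p)).
Proof.
move=> TS Tp hphi e e0; have [n [a [y [Ty hy]]]] := hphi e e0.
exists n.+1, (fun i => if unlift ord0 i is Some j then a j else - \sum_(j < n) a j),
  (fun i => if unlift ord0 i is Some j then y j else p); split.
  by move=> i; case: (unlift ord0 i) => [j|]; apply: TS.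
move=> f hf; rewrite big_ord_recl unlift_none.
have hl (i : 'I_n) : unlift ord0 (lift ord0 i) = Some i by rewrite liftK.
rewrite [X in - _ * f p + X](eq_bigr (fun i : 'I_n => a i * f (y i))); last by move=> i _; rewrite hl.
have hg : lip1_0 T p (fun x => f x - f p).
  split; first by rewrite subrr.
  move=> x y' Tx Ty'; rewrite opprB addrA subrK.
  by case: hf => _ hf; apply: hf; apply: TS.
have := hy _ hg.
suff -> : \sum_(i < n) a i * (f (y i) - f p) =
  - (\sum_(j < n) a j) * f p + \sum_(i < n) a i * f (y i) by [].
rewrite mulNr mulr_suml -sumrN -big_split /=; apply: eq_bigr => i _; lra.
Qed.

Lemma restrict_cotype q S T p p' : T `<=` S -> T p -> S p' ->
  free_cotype q S p' -> free_cotype q T p.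
Proof.
move=> TS Tp Sp' [C [C0 hC]]; exists C; split => // n phi hphi.
have := hC n (fun i f => phi i (fun x => f x - f p))
  (fun i => restrict_infree p' TS Tp (hphi i)).
have E1 i : free_norm S p' (fun f => phi i (fun x => f x - f p)) = free_norm T p (phi i).
  by apply: restrict_norm => //; exact: in_free_inv.
have E2 (e : {ffun 'I_n -> bool}) :
  free_norm S p' (fun f => \sum_(i < n) sgn (e i) * phi i (fun x => f x - f p)) =
  free_norm T p (fun f => \sum_(i < n) sgn (e i) * phi i f).
  apply: (restrict_norm (Phi := fun f => \sum_(i < n) sgn (e i) * phi i f)) => //.
  move=> f g hf hg hfg; apply: eq_bigr => i _.
  by rewrite (in_free_inv (hphi i) hf hg hfg).
under eq_bigr do rewrite E1.
by under [X in _ <= C * Num.sqrt (X / _)]eq_bigr do rewrite E2.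
Qed.

End B.

Section C.
Context {R : realType} {X : normedModType R}.

Lemma cvg_range_compact (y : nat -> X) l : y @ \oo --> l -> range y l ->
  compact (range y).
Proof.
move=> yl Rl F PF FA.
have [cl|ncl] := pselect (cluster F l); first by exists l.
have [A [B [FAA [nB AB0]]]] : exists A B, F A /\ nbhs l B /\ A `&` B = set0.
  apply: contrapT => hn; apply: ncl => A B FAA nB.
  apply/set0P/eqP => AB; apply: hn; by exists A, B.
have [N _ hN] := yl B nB.
have FFin : F (y @` [set n | (n < N)%N]).
  apply: filterS (filterI FA FAA) => _ [[n _ <-] An].
  exists n => //=; rewrite ltnNge; apply/negP => Nn.
  have : (A `&` B) (y n) by split => //; exact: hN.
  by rewrite AB0.
have [z [[n _ <-] cz]] := finite_compact (finite_image y (finite_II N)) PF FFin.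
by exists (y n); split => //; exists n.
Qed.

Lemma countable_range (y : nat -> X) : countable (range y).
Proof. exact: card_image_le. Qed.

End C.

Section D.
Context {R : realType} {X : normedModType R}.

Definition comb (s : seq (R * X)) (f : X -> R) : R := \sum_(c <- s) c.1 * f c.2.

Definition viol (q C : R) (S : set X) (p : X) n (phi : 'I_n -> (X -> R) -> R) :=
  C * Num.sqrt ((\sum_(e : {ffun 'I_n -> bool})
                       free_norm S p (fun f => \sum_(i < n) sgn (e i) * phi i f) ^+ 2)
                    / 2 ^+ n) <
  (\sum_(i < n) free_norm S p (phi i) `^ q) `^ q^-1.

Lemma scale_norm (A T : set X) (t : R) (Psi : (X -> R) -> R) : 0 < t -> A 0 ->
  (forall a, A a -> T (t *: a)) ->
  (forall f f', (forall a, A a -> f a = f' a) -> Psi f = Psi f') ->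
  free_norm T 0 (fun g => Psi (fun x => g (t *: x) / t)) = free_norm setT 0 Psi.
Proof.
move=> t0 A0 AT hsupp; rewrite /free_norm; congr sup.
apply/seteqP; split => r [g [hg ->]].
  have [G [GA Glip]] : exists G : X -> R, (forall x, A x -> G x = g (t *: x) / t) /\
     forall x y, `|G x - G y| <= `|x - y|.
    apply: mcshane; first by exists 0.
    move=> a b Aa Ab; rewrite -mulrBl normrM normfV (gtr0_norm t0).
    rewrite ler_pdivrMr // mulrC.
    have -> : t * `|a - b| = `|t *: a - t *: b| by rewrite -scalerBr normrZ (gtr0_norm t0).
    by case: hg => _ hg; apply: hg; apply: AT.
  exists G; split.
    split => //; rewrite GA // scaler0; case: hg => -> _; by rewrite mul0r.
  by congr (`|_|); apply: hsupp => a Aa; rewrite GA.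
exists (fun x => t * g (t^-1 *: x)); split.
  split; first by rewrite scaler0; case: hg => -> _; rewrite mulr0.
  move=> x y _ _; rewrite -mulrBr normrM (gtr0_norm t0).
  case: hg => _ hg; apply: le_trans (ler_wpM2l (ltW t0) (hg _ _ I I)) _.
  by rewrite -scalerBr normrZ normfV (gtr0_norm t0) mulrA mulfV ?gt_eqF // mul1r.
congr (`|_|); congr Psi; apply: funext => x.
by rewrite scalerA mulVf ?gt_eqF // scale1r [t * _]mulrC mulfK ?gt_eqF.
Qed.

Lemma comb_supp (A : set X) s f f' : (forall c, c \in s -> A c.2) ->
  (forall a, A a -> f a = f' a) -> comb s f = comb s f'.
Proof.
by move=> sA hff; apply: eq_big_seq => c cs; rewrite hff //; apply: sA.
Qed.

Lemma comb_scale_infree (T : set X) s t : (forall c, c \in s -> T (t *: c.2)) ->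
  in_free T 0 (fun g => comb s (fun x => g (t *: x) / t)).
Proof.
move=> sT e e0.
exists (size s), (fun i => (nth (0, 0) s i).1 / t), (fun i => t *: (nth (0, 0) s i).2).
split; first by move=> i; apply: sT; apply: mem_nth.
move=> f _; rewrite /comb (big_nth (0, 0)) big_mkord.
rewrite (eq_bigr (fun i : 'I_(size s) => (nth (0, 0) s i).1 / t * f (t *: (nth (0, 0) s i).2))).
  by rewrite subrr normr0 ltW.
by move=> i _; rewrite mulrA mulrAC.
Qed.

Lemma viol_ext q K (S S' : set X) p p' n (phi psi : 'I_n -> (X -> R) -> R) :
  (forall i, free_norm S p (phi i) = free_norm S' p' (psi i)) ->
  (forall e : {ffun 'I_n -> bool},
     free_norm S p (fun f => \sum_(i < n) sgn (e i) * phi i f) =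
     free_norm S' p' (fun f => \sum_(i < n) sgn (e i) * psi i f)) ->
  viol q K S' p' psi -> viol q K S p phi.
Proof.
move=> E1 E2; rewrite /viol.
have -> : \sum_(i < n) free_norm S p (phi i) `^ q = \sum_(i < n) free_norm S' p' (psi i) `^ q.
  by apply: eq_bigr => i _; rewrite E1.
have -> : \sum_(e : {ffun 'I_n -> bool})
     free_norm S p (fun f => \sum_(i < n) sgn (e i) * phi i f) ^+ 2 =
   \sum_(e : {ffun 'I_n -> bool})
     free_norm S' p' (fun f => \sum_(i < n) sgn (e i) * psi i f) ^+ 2.
  by apply: eq_bigr => e _; rewrite E2.
by move=> h; assumption.
Qed.

Lemma viol_scale q K (T : set X) t n (s : 'I_n -> seq (R * X)) : 0 < t -> T 0 ->
  (forall i c, c \in s i -> T (t *: c.2)) ->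
  viol q K setT 0 (fun i => comb (s i)) ->
  viol q K T 0 (fun i g => comb (s i) (fun x => g (t *: x) / t)).
Proof.
move=> t0 T0 sT.
pose A := [set a : X | a = 0 \/ exists i c, c \in s i /\ a = c.2].
have A0 : A 0 by left.
have AT a : A a -> T (t *: a).
  by case=> [->|[i [c [cs ->]]]]; [rewrite scaler0 | apply: (sT i)].
have sA i c : c \in s i -> A c.2 by move=> cs; right; exists i, c.
have E1 i : free_norm T 0 (fun g => comb (s i) (fun x => g (t *: x) / t)) =
            free_norm setT 0 (comb (s i)).
  apply: (scale_norm (A := A) (Psi := comb (s i)) t0 A0 AT) => f f' hff; exact: (comb_supp (sA i)).
have E2 (e : {ffun 'I_n -> bool}) :
  free_norm T 0 (fun g => \sum_(i < n) sgn (e i) * comb (s i) (fun x => g (t *: x) / t)) =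
  free_norm setT 0 (fun f => \sum_(i < n) sgn (e i) * comb (s i) f).
  apply: (scale_norm (A := A) (Psi := fun f => \sum_(i < n) sgn (e i) * comb (s i) f) t0 A0 AT).
  move=> f f' hff; apply: eq_bigr => i _; congr (_ * _); exact: (comb_supp (sA i)).
Time (apply: viol_ext; [exact: E1 | exact: E2]).
Qed.

End D.

Section E.
Context {R : realType}.

Lemma powK (x q : R) : 0 <= x -> 0 < q -> (x `^ q) `^ q^-1 = x.
Proof.
by move=> x0 q0; rewrite -powRrM mulfV ?gt_eqF // powRr1.
Qed.

Lemma lq_half n (q : R) (a a' : 'I_n -> R) : 0 < q ->
  (forall i, 0 <= a i) -> (forall i, a i / 2 <= a' i) ->
  (\sum_(i < n) a i `^ q) `^ q^-1 / 2 <= (\sum_(i < n) a' i `^ q) `^ q^-1.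
Proof.
move=> q0 a0 aa.
have h : 2^-1 `^ q * \sum_(i < n) a i `^ q <= \sum_(i < n) a' i `^ q.
  rewrite mulr_sumr; apply: ler_sum => i _.
  rewrite mulrC -powRM //; apply: ge0_ler_powR; rewrite ?nnegrE ?(ltW q0) //.
  - by apply: mulr_ge0.
  - by apply: le_trans (aa i); apply: mulr_ge0.
have S0 : 0 <= \sum_(i < n) a i `^ q by apply: sumr_ge0 => i _; exact: powR_ge0.
apply: le_trans (ge0_ler_powR _ _ _ h); rewrite ?nnegrE.
- by rewrite powRM ?powR_ge0 // powK // mulrC.
- by rewrite invr_ge0 ltW.
- by apply: mulr_ge0 => //; exact: powR_ge0.
- by apply: sumr_ge0 => i _; exact: powR_ge0.
Qed.

Lemma key_ineq2 (K c L L' V V' : R) : 0 < K -> 0 <= c -> 0 <= V -> 0 <= V' ->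
  V' <= 2 * V + 2 * c ^+ 2 -> 4 * K * c <= L -> L / 2 <= L' ->
  4 * K * Num.sqrt V < L -> K * Num.sqrt V' < L'.
Proof.
move=> K0 c0 V0 V'0 hV hc hL hb.
have s0 : 0 <= Num.sqrt V by apply: sqrtr_ge0.
have w0 : 0 <= Num.sqrt (2 * V + 2 * c ^+ 2) by apply: sqrtr_ge0.
have ss : Num.sqrt V ^+ 2 = V by rewrite sqr_sqrtr.
have ww : Num.sqrt (2 * V + 2 * c ^+ 2) ^+ 2 = 2 * V + 2 * c ^+ 2.
  by rewrite sqr_sqrtr //; apply: addr_ge0; apply: mulr_ge0 => //; exact: sqr_ge0.
have hsw : Num.sqrt V' <= Num.sqrt (2 * V + 2 * c ^+ 2).
  by rewrite ler_sqrt // -ww; exact: sqr_ge0.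
move: s0 w0 ss ww hsw hb.
move: (Num.sqrt V) (Num.sqrt V') (Num.sqrt (2 * V + 2 * c ^+ 2)) => s s' w s0 w0 ss ww hsw hb.
have zz : (K * w) ^+ 2 = 2 * (K * s) ^+ 2 + 2 * (K * c) ^+ 2.
  by rewrite !exprMn ww -ss; ring.
have hKs' : K * s' <= K * w by apply: ler_wpM2l => //; exact: ltW.
have hx : 4 * (K * s) < L by rewrite mulrA.
have hy : 4 * (K * c) <= L by rewrite mulrA.
have x0 : 0 <= K * s by apply: mulr_ge0 => //; exact: ltW.
have y0 : 0 <= K * c by apply: mulr_ge0 => //; exact: ltW.
have z0 : 0 <= K * w by apply: mulr_ge0 => //; exact: ltW.
move: zz hKs' hx hy x0 y0 z0.
move: (K * s) (K * s') (K * w) (K * c) => x x' z y zz hKs' hx hy x0 y0 z0.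
nra.
Qed.

Lemma sq_bound (u v c : R) : 0 <= v -> v <= u + c -> v ^+ 2 <= 2 * u ^+ 2 + 2 * c ^+ 2.
Proof.
move=> h1 h2.
have h3 : 0 <= (u + c - v) * (u + c + v) by apply: mulr_ge0; lra.
have h4 : 0 <= (u - c) ^+ 2 by apply: sqr_ge0.
nra.
Qed.

Lemma key_ineq n (q K c : R) (a a' : 'I_n -> R) (b b' : {ffun 'I_n -> bool} -> R) :
  0 < q -> 0 < K -> 0 <= c -> (forall i, 0 <= a i) -> (forall i, a i / 2 <= a' i) ->
  (forall e, 0 <= b' e) -> (forall e, b' e <= b e + c) ->
  4 * K * c <= (\sum_(i < n) a i `^ q) `^ q^-1 ->
  4 * K * Num.sqrt ((\sum_e b e ^+ 2) / 2 ^+ n) < (\sum_(i < n) a i `^ q) `^ q^-1 ->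
  K * Num.sqrt ((\sum_e b' e ^+ 2) / 2 ^+ n) < (\sum_(i < n) a' i `^ q) `^ q^-1.
Proof.
move=> q0 K0 c0 a0 aa b0 bb hc hb.
have hL := lq_half q0 a0 aa.
have n2 : 0 < 2 ^+ n :> R by apply: exprn_gt0.
have V0 : 0 <= (\sum_e b e ^+ 2) / 2 ^+ n.
  by apply: divr_ge0; [apply: sumr_ge0 => e _; exact: sqr_ge0|exact: ltW].
have V'0 : 0 <= (\sum_e b' e ^+ 2) / 2 ^+ n.
  by apply: divr_ge0; [apply: sumr_ge0 => e _; exact: sqr_ge0|exact: ltW].
have hV : (\sum_e b' e ^+ 2) / 2 ^+ n <= 2 * ((\sum_e b e ^+ 2) / 2 ^+ n) + 2 * c ^+ 2.
  have h1 : \sum_e b' e ^+ 2 <= \sum_(e : {ffun 'I_n -> bool}) (2 * b e ^+ 2 + 2 * c ^+ 2).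
    by apply: ler_sum => e _; apply: sq_bound.
  rewrite big_split /= -mulr_sumr sumr_const card_ffun card_bool card_ord in h1.
  rewrite -[_ *+ (2 ^ n)]mulr_natr natrX in h1.
  rewrite ler_pdivrMr //; apply: (le_trans h1); rewrite le_eqVlt; apply/orP; left.
  apply/eqP; field; exact: lt0r_neq0.
exact: (key_ineq2 K0 c0 V0 V'0 hV hc hL hb).
Qed.

End E.

Section F.
Context {R : realType} {X : normedModType R}.

Lemma norm_sgn b : `|sgn b : R| = 1.
Proof. by case: b; rewrite /sgn ?normrN normr1. Qed.

Lemma comb_bnd (s : seq (R * X)) : bnd setT 0 (comb s).
Proof.
exists (\sum_(c <- s) `|c.1| * `|c.2|) => f [f0 hf].
apply: le_trans (ler_norm_sum _ _ _) _; apply: ler_sum => c _.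
rewrite normrM ler_wpM2l //; have := hf c.2 0 I I; by rewrite f0 !subr0.
Qed.

Lemma sgn_bnd n (phi : 'I_n -> (X -> R) -> R) (e : {ffun 'I_n -> bool}) :
  (forall i, bnd setT 0 (phi i)) ->
  bnd setT 0 (fun f => \sum_(i < n) sgn (e i) * phi i f).
Proof.
move=> hb; exists (\sum_(i < n) free_norm setT 0 (phi i)) => f hf.
apply: le_trans (ler_norm_sum _ _ _) _; apply: ler_sum => i _.
by rewrite normrM norm_sgn mul1r; apply: free_norm_ub.
Qed.

Lemma approx q K n (phi : 'I_n -> (X -> R) -> R) : 0 < q -> 0 < K ->
  (forall i, in_free setT 0 (phi i)) -> viol q (4 * K) setT 0 phi ->
  exists s : 'I_n -> seq (R * X), viol q K setT 0 (fun i => comb (s i)).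
Proof.
move=> q0 K0 hphi hv.
have bphi i : bnd setT 0 (phi i) by apply: in_free_bnd.
pose L := (\sum_(i < n) free_norm setT 0 (phi i) `^ q) `^ q^-1.
have L0 : 0 < L.
  apply: le_lt_trans hv; apply: mulr_ge0; last exact: sqrtr_ge0.
  by apply: mulr_ge0 => //; exact: ltW.
pose eta := L / (4 * K) / (n%:R + 1).
have eta0 : 0 < eta.
  by apply: divr_gt0; [apply: divr_gt0 => //; apply: mulr_gt0 | apply: ltr_wpDl].
pose delta i := if 0 < free_norm setT 0 (phi i)
  then Num.min (free_norm setT 0 (phi i) / 2) eta else eta.
have delta0 i : 0 < delta i.
  rewrite /delta; case: ifP => // ha; rewrite lt_min eta0 andbT.
  by apply: divr_gt0.
have deltaeta i : delta i <= eta.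
  by rewrite /delta; case: ifP => // _; rewrite ge_min lexx orbT.
have hs : forall i, exists s : seq (R * X), forall f, lip1_0 setT 0 f ->
    `|phi i f - comb s f| <= delta i.
  move=> i; have [m [al [y [_ hy]]]] := hphi i (delta i) (delta0 i).
  exists [seq (al j, y j) | j <- index_enum 'I_m] => f hf.
  by rewrite /comb big_map; apply: hy.
have [s hs'] := choice hs.
exists s; rewrite /viol.
apply: (@key_ineq R n q K (n%:R * eta)
   (fun i => free_norm setT 0 (phi i)) (fun i => free_norm setT 0 (comb (s i)))
   (fun e => free_norm setT 0 (fun f => \sum_(i < n) sgn (e i) * phi i f))
   (fun e => free_norm setT 0 (fun f => \sum_(i < n) sgn (e i) * comb (s i) f))).
- exact: q0.
- exact: K0.
- by apply: mulr_ge0 => //; exact: ltW.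
- by move=> i; exact: free_norm_ge0.
- move=> i /=.
  have h1 : free_norm setT 0 (phi i) <= free_norm setT 0 (comb (s i)) + delta i.
    apply: free_norm_le => f hf.
    have := hs' i f hf; have := free_norm_ub (comb_bnd (s i)) hf.
    have := ler_normD (phi i f - comb (s i) f) (comb (s i) f); rewrite subrK.
    lra.
  have h2 := free_norm_ge0 setT 0 (comb (s i)).
  move: h1; rewrite /delta; case: ifP => ha.
    have hm : Num.min (free_norm setT 0 (phi i) / 2) eta <= free_norm setT 0 (phi i) / 2.
      by rewrite ge_min lexx ?orbT.
    lra.
  move/negbT: ha; rewrite -leNgt => ha; lra.
- by move=> e; exact: free_norm_ge0.
- move=> e /=; apply: free_norm_le => f hf.
  have h1 : `|\sum_(i < n) sgn (e i) * phi i f| <=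
            free_norm setT 0 (fun f => \sum_(i < n) sgn (e i) * phi i f).
    by apply: free_norm_ub => //; apply: sgn_bnd.
  have h2 : `|\sum_(i < n) sgn (e i) * phi i f - \sum_(i < n) sgn (e i) * comb (s i) f|
            <= n%:R * eta.
    rewrite -sumrB; apply: le_trans (ler_norm_sum _ _ _) _.
    apply: le_trans (_ : \sum_(i < n) eta <= _); last first.
      by rewrite sumr_const card_ord mulr_natl.
    apply: ler_sum => i _; rewrite -mulrBr normrM norm_sgn mul1r.
    exact: le_trans (hs' i f hf) (deltaeta i).
  have := ler_normD (\sum_(i < n) sgn (e i) * phi i f)
     (- (\sum_(i < n) sgn (e i) * phi i f - \sum_(i < n) sgn (e i) * comb (s i) f)).
  rewrite normrN opprB addrA addrC addrA (addrC _ (\sum_(i < n) sgn (e i) * phi i f)).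
  rewrite subrr add0r; lra.
- have -> : 4 * K * (n%:R * eta) = n%:R * L / (n%:R + 1).
    rewrite /eta; field; rewrite ?gt_eqF //; apply: ltr_wpDl => //.
  by rewrite ler_pdivrMr ?ltr_wpDl // mulrDr mulr1 [n%:R * L]mulrC lerDl ltW.
- exact: hv.
Qed.

End F.

Section G.
Context {R : realType} {X : normedModType R}.
Variable B : nat -> seq X.

Definition LL (K : nat) : seq X := flatten (map B (iota 0 K)).
Lemma LLS K : LL K.+1 = LL K ++ B K.
Proof. by rewrite /LL -addn1 iotaD map_cat flatten_cat /= cats0. Qed.
Arguments LL K : simpl never.

Lemma LL_size K : (forall k, B k != [::]) -> (K <= size (LL K))%N.
Proof.
move=> hB; elim: K => // K IH; rewrite LLS size_cat.
have : (0 < size (B K))%N by rewrite lt0n size_eq0.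
lia.
Qed.

Lemma LL_prefix K d : exists r, LL (K + d) = LL K ++ r /\
  forall y, y \in r -> exists k, (K <= k)%N /\ y \in B k.
Proof.
elim: d => [|d [r [hr hy]]]; first by exists [::]; rewrite addn0 cats0.
exists (r ++ B (K + d)); split; first by rewrite addnS LLS hr catA.
move=> y; rewrite mem_cat => /orP[/hy //|yB].
by exists (K + d)%N; split => //; exact: leq_addr.
Qed.

Definition xs (n : nat) : X := nth 0 (LL n.+1) n.

Lemma xs_nth K i : (forall k, B k != [::]) -> (i < size (LL K))%N -> xs i = nth 0 (LL K) i.
Proof.
move=> hB iK.
have [r1 [h1 _]] := LL_prefix i.+1 K.
have [r2 [h2 _]] := LL_prefix K i.+1.
have hi : (i < size (LL i.+1))%N := LL_size i.+1 hB.
have e1 : nth 0 (LL (i.+1 + K)) i = nth 0 (LL i.+1) i by rewrite h1 nth_cat hi.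
have e2 : nth 0 (LL (K + i.+1)) i = nth 0 (LL K) i by rewrite h2 nth_cat iK.
by rewrite /xs -e1 addnC e2.
Qed.

Lemma xs_range k y : (forall k, B k != [::]) -> y \in B k -> range xs y.
Proof.
move=> hB yB.
have yL : y \in LL k.+1 by rewrite LLS mem_cat yB orbT.
exists (index y (LL k.+1)) => //.
by rewrite (xs_nth hB (K := k.+1)) ?index_mem // nth_index.
Qed.

Lemma xs_cvg : (forall k, B k != [::]) ->
  (forall k y, y \in B k -> `|y| <= (k.+1%:R)^-1) -> xs @ \oo --> (0 : X).
Proof.
move=> hB hy; apply/cvgr0Pnorm_lt => e e0.
pose K := Num.bound (e^-1).
have hK : e^-1 < K%:R by apply: archi_boundP; rewrite invr_ge0 ltW.
exists (size (LL K)) => // n /= hn.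
have [r [hr hr']] := LL_prefix K (n.+1 - K).
have KL := LL_size K hB.
have Kn : (K <= n.+1)%N by apply: (leq_trans KL); apply: (leq_trans hn).
rewrite /xs -(subnKC Kn) hr nth_cat ltnNge hn /=.
have [hlt|hge] := ltnP (n - size (LL K)) (size r).
  have /hr' [k [Kk yk]] := mem_nth 0 hlt.
  apply: le_lt_trans (hy _ _ yk) _.
  rewrite -[e]invrK ltf_pV2 ?posrE ?invr_gt0 ?ltr0n //.
  apply: lt_le_trans hK _; rewrite ler_nat; lia.
by rewrite nth_default // normr0.
Qed.

End G.

Section H.
Context {R : realType}.

Lemma lq_mono n (q q' : R) (a : 'I_n -> R) : 0 < q -> q <= q' ->
  (forall i, 0 <= a i) ->
  (\sum_(i < n) a i `^ q') `^ q'^-1 <= (\sum_(i < n) a i `^ q) `^ q^-1.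
Proof.
move=> q0 qq a0.
have q'0 : 0 < q' by apply: lt_le_trans qq.
set S := (\sum_(i < n) a i `^ q) `^ q^-1.
have S0 : 0 <= S by apply: powR_ge0.
have Sq : \sum_(i < n) a i `^ q = S `^ q.
  rewrite /S powRAC powK //; apply: sumr_ge0 => i _; exact: powR_ge0.
have aS i : a i <= S.
  rewrite -(powK (a0 i) q0) /S; apply: ge0_ler_powR; rewrite ?nnegrE ?powR_ge0 //.
  - by rewrite invr_ge0 ltW.
  - by apply: sumr_ge0 => j _; exact: powR_ge0.
  - by rewrite (bigD1 i) //= lerDl; apply: sumr_ge0 => j _; exact: powR_ge0.
have [S00|Spos] := eqVneq S 0.
  have a00 i : a i = 0 by apply/eqP; rewrite eq_le a0 andbT -S00 aS.
  rewrite big1; first by rewrite powR0 ?S00 // invr_eq0 gt_eqF.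
  by move=> i _; rewrite a00 powR0 // gt_eqF.
have Sp : 0 < S by rewrite lt_neqAle eq_sym Spos S0.
have h : \sum_(i < n) a i `^ q' <= S `^ q'.
  have -> : S `^ q' = S `^ (q' - q) * S `^ q.
    by rewrite -powRD ?subrK // Spos implybT.
  rewrite -Sq mulr_sumr; apply: ler_sum => i _.
  have [ai0|aipos] := eqVneq (a i) 0.
    by rewrite ai0 powR0 ?gt_eqF // powR0 ?gt_eqF // mulr0.
  have -> : a i `^ q' = a i `^ (q' - q) * a i `^ q.
    by rewrite -powRD ?subrK // aipos implybT.
  rewrite mulrC [X in _ <= X]mulrC; apply: ler_wpM2l; first exact: powR_ge0.
  by apply: ge0_ler_powR; rewrite ?nnegrE ?subr_ge0.
apply: le_trans (ge0_ler_powR _ _ _ h) _.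
- by rewrite invr_ge0 ltW.
- by rewrite nnegrE; apply: sumr_ge0 => i _; exact: powR_ge0.
- by rewrite nnegrE powR_ge0.
- by rewrite powK.
Qed.

End H.

Section I.
Context {R : realType} {X : normedModType R}.

Lemma build (qs : nat -> R) :
  (forall k, exists n (s : 'I_n -> seq (R * X)),
      viol (qs k) (k.+1%:R) setT 0 (fun i => comb (s i))) ->
  exists x : nat -> X, x @ \oo --> 0 /\ range x 0 /\
    forall k, exists n (phi : 'I_n -> (X -> R) -> R),
      (forall i, in_free (range x) 0 (phi i)) /\ viol (qs k) (k.+1%:R) (range x) 0 phi.
Proof.
move=> hk.
have hk' : forall k, exists ns : {n : nat & 'I_n -> seq (R * X)},
   viol (qs k) (k.+1%:R) setT 0 (fun i => comb (projT2 ns i)).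
  by move=> k; have [n [s hs]] := hk k; exists (existT _ n s).
have [D hD] := choice hk'.
pose pts k := flatten [seq projT2 (D k) i | i <- index_enum 'I_(projT1 (D k))].
pose M k := \sum_(c <- pts k) `|c.2|.
pose t k := ((k.+1%:R) * (1 + M k))^-1.
have M0 k : 0 <= M k by apply: sumr_ge0 => c _.
have M1 k : 0 < 1 + M k by have := M0 k; lra.
have t0 k : 0 < t k by rewrite invr_gt0 mulr_gt0.
pose Bk k := (0 : X) :: [seq t k *: c.2 | c <- pts k].
have hB k : Bk k != [::] by [].
have hy k y : y \in Bk k -> `|y| <= (k.+1%:R)^-1.
  rewrite inE => /orP[/eqP ->|/mapP [c cin ->]]; first by rewrite normr0 invr_ge0.
  rewrite normrZ gtr0_norm //.
  have cM : `|c.2| <= M k.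
    by rewrite /M (big_rem _ cin) /= lerDl; apply: sumr_ge0.
  have e : t k * (1 + M k) = (k.+1%:R)^-1.
    by rewrite /t invfM -mulrA mulVf ?mulr1 // gt_eqF.
  rewrite -e; apply: ler_wpM2l; [exact: ltW | lra].
exists (xs Bk); split; first exact: xs_cvg.
have r0 : range (xs Bk) 0 by apply: (@xs_range _ _ Bk 0) => //; rewrite inE eqxx.
split => // k.
exists (projT1 (D k)), (fun i g => comb (projT2 (D k) i) (fun x => g (t k *: x) / t k)).
have memT i c : c \in projT2 (D k) i -> range (xs Bk) (t k *: c.2).
  move=> cin; apply: (@xs_range _ _ Bk k) => //; rewrite inE; apply/orP; right.
  apply: map_f; apply/flattenP; exists (projT2 (D k) i) => //.
  by apply: map_f; exact: mem_index_enum.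
split; first by move=> i; apply: comb_scale_infree => c; exact: memT.
apply: viol_scale; [exact: t0 | exact: r0 | exact: memT | exact: hD].
Qed.

Lemma not_cotype_data (q : R) : 0 < q -> ~ free_cotype q [set: X] 0 ->
  forall k, exists n (s : 'I_n -> seq (R * X)),
      viol q (k.+1%:R) setT 0 (fun i => comb (s i)).
Proof.
move=> q0 hn k; apply: contrapT => hk; apply: hn.
exists (4 * k.+1%:R); split; first by apply: mulr_gt0.
move=> n phi hphi; rewrite leNgt; apply/negP => hv; apply: hk.
have [s hs] := approx q0 (ltr0Sn _ k) hphi hv.
by exists n, s.
Qed.

Lemma viol_contra q K C S p n (phi : 'I_n -> (X -> R) -> R) : C <= K ->
  viol q K S p phi ->
  ~ ((\sum_(i < n) free_norm S p (phi i) `^ q) `^ q^-1 <=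
      C * Num.sqrt ((\sum_(e : {ffun 'I_n -> bool})
                       free_norm S p (fun f => \sum_(i < n) sgn (e i) * phi i f) ^+ 2)
                    / 2 ^+ n)).
Proof.
move=> CK hv hC; have := lt_le_trans hv hC.
apply/negP; rewrite -leNgt; apply: ler_wpM2r => //; exact: sqrtr_ge0.
Qed.

Lemma imp30 (q : R) : 0 < q ->
  (forall x : nat -> X, x @ \oo --> (0 : X) -> forall p, range x p -> free_cotype q (range x) p) ->
  free_cotype q [set: X] 0.
Proof.
move=> q0 h3; apply: contrapT => hn.
have [x [xc [x0 hx]]] := build (not_cotype_data q0 hn).
have [C [C0 hC]] := h3 x xc 0 x0.
pose k := Num.bound C.
have Ck : C <= k.+1%:R.
  apply: ltW; apply: lt_le_trans (archi_boundP (ltW C0)) _; rewrite ler_nat; lia.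
have [n [phi [hphi hv]]] := hx k.
exact: (viol_contra Ck hv (hC n phi hphi)).
Qed.

Lemma imp30r :
  (forall x : nat -> X, x @ \oo --> (0 : X) -> forall p, range x p -> free_rad_cotype (range x) p) ->
  free_rad_cotype [set: X] 0.
Proof.
move=> h3; apply: contrapT => hn.
have qs0 k : 0 < k.+2%:R :> R by [].
have hd k : exists n (s : 'I_n -> seq (R * X)),
    viol (k.+2%:R) (k.+1%:R) setT 0 (fun i => comb (s i)).
  apply: (not_cotype_data (qs0 k)) => hq; apply: hn; exists k.+2%:R; split => //.
  by rewrite ler_nat.
have [x [xc [x0 hx]]] := build hd.
have [q [q2 [C [C0 hC]]]] := h3 x xc 0 x0.
have Cm : C <= Num.max C q by rewrite le_max lexx.
have qm : q <= Num.max C q by rewrite le_max lexx orbT.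
pose k := Num.bound (Num.max C q).
have hk : Num.max C q < k%:R.
  by apply: archi_boundP; apply: le_trans (ltW C0) Cm.
have Ck : C <= k.+1%:R.
  apply: ltW; apply: le_lt_trans Cm _; apply: lt_le_trans hk _; rewrite ler_nat; lia.
have qk : q <= k.+2%:R.
  apply: ltW; apply: le_lt_trans qm _; apply: lt_le_trans hk _; rewrite ler_nat; lia.
have [n [phi [hphi hv]]] := hx k.
apply: (viol_contra Ck hv).
apply: le_trans (hC n phi hphi).
apply: lq_mono => //; first lra.
by move=> i; exact: free_norm_ge0.
Qed.

End I.

Lemma imp23 {R : realType} {X : normedModType R} (Q : set X -> X -> Prop) :
  (forall S T p p', T `<=` S -> T p -> S p' -> Q S p' -> Q T p) ->
  (forall K : set X, compact K -> countable K -> forall p, K p -> Q K p) ->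
  forall x : nat -> X, x @ \oo --> (0 : X) -> forall p, range x p -> Q (range x) p.
Proof.
move=> hmono h2 x xc p xp.
pose y n := if n is m.+1 then x m else 0.
have yc : y @ \oo --> (0 : X) by rewrite -cvg_shiftS.
have y0 : range y 0 by exists 0%N.
have xy : range x `<=` range y by move=> _ [m _ <-]; exists m.+1.
apply: (hmono (range y) (range x) p p) => //; first exact: xy.
apply: h2; [exact: cvg_range_compact yc y0 | exact: countable_range | exact: xy].
Qed.

Lemma rad_restrict {R : realType} {X : normedModType R} (S T : set X) p p' :
  T `<=` S -> T p -> S p' -> free_rad_cotype S p' -> free_rad_cotype T p.
Proof.
move=> TS Tp Sp' [q [q2 hq]]; exists q; split => //.
exact: (restrict_cotype TS Tp Sp' hq).
Qed.

Unset Implicit Arguments.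

Theorem proposition5p4 (R : realType) (X : completeNormedModType R) :
  (forall q : R, 2 <= q ->
    [<-> free_cotype q [set: X] 0;
         forall K : set X, compact K -> forall p, K p -> free_cotype q K p;
         forall K : set X, compact K -> countable K -> forall p, K p -> free_cotype q K p;
         forall x : nat -> X, x @ \oo --> (0 : X) ->
           forall p, range x p -> free_cotype q (range x) p]) /\
  [<-> free_rad_cotype [set: X] 0;
       forall K : set X, compact K -> forall p, K p -> free_rad_cotype K p;
       forall K : set X, compact K -> countable K -> forall p, K p -> free_rad_cotype K p;
       forall x : nat -> X, x @ \oo --> (0 : X) ->
         forall p, range x p -> free_rad_cotype (range x) p].
Proof.
split.
  move=> q q2; have q0 : 0 < q by apply: lt_le_trans q2.
  tfae.
  - move=> h0 K _ p Kp; by apply: (restrict_cotype (subsetT K) Kp _ h0).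
  - by move=> h1 K cK _ p Kp; apply: h1.
  - apply: imp23 => S T p p' TS Tp Sp' hS; exact: (restrict_cotype TS Tp Sp' hS).
  - exact: imp30.
tfae.
- move=> h0 K _ p Kp; by apply: (rad_restrict (subsetT K) Kp _ h0).
- by move=> h1 K cK _ p Kp; apply: h1.
- apply: imp23 => S T p p' TS Tp Sp' hS; exact: (rad_restrict TS Tp Sp' hS).
- exact: imp30r.
Qed.
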